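(* Let the data vector $S\in\mathbb{R}^d$ have Gaussian density \[ f(s\mid\beta^* )=(2\pi)^{-d/2}|\Sigma_f|^{-1/2}\exp\!\big(-(s-\mu(\beta^* ))^T\Sigma_f^{-1}(s-\mu(\beta^* ))/2\big), \] with differentiable mean map $\mu:\mathbb{R}^k\to\mathbb{R}^d$ and positive definite $\Sigma_f$, and let $\pi$ be a differentiable prior density on $\beta^*\in\mathbb{R}^k$. Let $D\in\mathbb{R}^{p\times d}$, $P\in\mathbb{R}^{p\times p}$, $q\in\mathbb{R}^p$, let $\Lambda_g^*$ be the convex conjugate of the log-MGF of the randomization, and let $b_{\mathcal{R}_O}$ be a barrier function on the constraint set $\mathcal{R}_O\subset\mathbb{R}^p$. Define the approximate log-normalizer \[ \log\hat{\mathbb{P}}(\beta^* )=-\inf_{s\in\mathbb{R}^d,\,o\in\mathbb{R}^p}\Big\{\tfrac12(s-\mu(\beta^* ))^T\Sigma_f^{-1}(s-\mu(\beta^* ))+\Lambda_g^*(Ds+Po+q)+b_{\mathcal{R}_O}(o)\Big\} \] and the pseudo selective posterior $\tilde\pi_E(\beta^*\mid s)\propto\pi(\beta^* )f(s\mid\beta^* )/\hat{\mathbb{P}}(\beta^* )$. Then the gradient of $\log\tilde\pi_E(\cdot\mid s)$ at $\beta^{*(K)}$ is \[ \frac{\partial\log\pi(\beta^* )}{\partial\beta^*}\Big|_{\beta^{*(K)}}+\Big(\frac{\partial\mu}{\partial\beta^*}\Big)^T\Big|_{\beta^{*(K)}}\Sigma_f^{-1}\Big\{s-s^*\big(\Sigma_f^{-1}\mu(\beta^{*(K)})\big)\Big\},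 \] where \[ s^*\big(\Sigma_f^{-1}\mu(\beta^* )\big)=\arg\max_{z\in\mathbb{R}^d}\Big(z^T\Sigma_f^{-1}\mu(\beta^* )-\tfrac12 z^T\Sigma_f^{-1}z-\inf_{o\in\mathbb{R}^p}\big\{\Lambda_g^*(Dz+Po+q)+b_{\mathcal{R}_O}(o)\big\}\Big). \]
   Context: The log-MGF of the randomization $\Omega\in\mathbb{R}^p$ is $\Lambda_g(t)=\log\mathbb{E}[\exp(t^T\Omega)]$ and its convex conjugate is $\Lambda_g^*(w)=\sup_t\{t^Tw-\Lambda_g(t)\}$. A barrier function $b_{\mathcal{R}_O}$ is a convex penalty finite on the interior of $\mathcal{R}_O$ and increasing continuously towards its boundary. $\partial\mu/\partial\beta^*$ denotes the $d\times k$ Jacobian of $\mu$. *)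

(* Defs.v *)
From HB Require Import structures.
From mathcomp Require Import all_boot all_order all_algebra.
From mathcomp Require Import all_classical all_reals all_analysis.
Set Implicit Arguments. Unset Strict Implicit. Unset Printing Implicit Defensive.
Import Order.TTheory GRing.Theory Num.Theory.
Import numFieldNormedType.Exports.
Local Open Scope classical_set_scope.
Local Open Scope ring_scope.

Section Defs.
Variable R : realType.

Definition quadf n (A : 'M[R]_n) (v : 'cV[R]_n) : R := (v^T *m A *m v) 0 0.

Definition symmetric_mx n (A : 'M[R]_n) : Prop := A^T = A.
Definition posdef_mx n (A : 'M[R]_n) : Prop :=
  symmetric_mx A /\ forall v : 'cV[R]_n, v != 0 -> 0 < quadf A v.

Definition gauss_density d k (mu : 'cV[R]_k -> 'cV[R]_d) (Sigma : 'M[R]_d)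
    (s : 'cV[R]_d) (beta : 'cV[R]_k) : R :=
  (2 * pi) `^ (- (d%:R) / 2) * (\det Sigma) `^ (- (1/2)) *
  expR (- quadf (invmx Sigma) (s - mu beta) / 2).

Definition mgf (dT : measure_display) (T : measurableType dT) p
    (Prob : probability T R) (Omega : T -> 'cV[R]_p) (t : 'cV[R]_p) : \bar R :=
  (\int[Prob]_x (expR ((t^T *m Omega x) 0 0))%:E)%E.

Definition logmgf (dT : measure_display) (T : measurableType dT) p
    (Prob : probability T R) (Omega : T -> 'cV[R]_p) (t : 'cV[R]_p) : \bar R :=
  match mgf Prob Omega t with
  | EFin r => (ln r)%:E
  | _ => +oo%E
  end.

Definition conjugate p (L : 'cV[R]_p -> \bar R) (w : 'cV[R]_p) : \bar R :=
  ereal_sup (range (fun t : 'cV[R]_p => (((t^T *m w) 0 0)%:E - L t)%E)).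

Definition barrier p (RO : set 'cV[R]_p) (b : 'cV[R]_p -> \bar R) : Prop :=
  [/\ (forall o, (interior RO) o -> b o \is a fin_num),
      (forall o, ~ (interior RO) o -> b o = +oo%E),
      (forall (x y : 'cV[R]_p) (l : R), 0 <= l <= 1 ->
          (b (l *: x + (1 - l) *: y)%R <= l%:E * b x + (1 - l)%:E * b y)%E),
      (forall o, (interior RO) o -> {for o, continuous b}) &
      (forall x, closure RO x -> ~ (interior RO) x ->
          b @ within (interior RO) (nbhs x) --> +oo%E)].

Definition hpart d p (Ls : 'cV[R]_p -> \bar R) (b : 'cV[R]_p -> \bar R)
    (D : 'M[R]_(p, d)) (P : 'M[R]_p) (q : 'cV[R]_p) (z : 'cV[R]_d) : \bar R :=
  ereal_inf (range (fun o : 'cV[R]_p => (Ls (D *m z + P *m o + q)%R + b o)%E)).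

Definition logPhat d k p (mu : 'cV[R]_k -> 'cV[R]_d) (Sigma : 'M[R]_d)
    (Ls : 'cV[R]_p -> \bar R) (b : 'cV[R]_p -> \bar R)
    (D : 'M[R]_(p, d)) (P : 'M[R]_p) (q : 'cV[R]_p) (beta : 'cV[R]_k) : \bar R :=
  (- ereal_inf (range (fun s : 'cV[R]_d =>
       ((1/2 * quadf (invmx Sigma) (s - mu beta))%:E + hpart Ls b D P q s)%E)))%E.

Definition sstar_obj d p (Sigma : 'M[R]_d)
    (Ls : 'cV[R]_p -> \bar R) (b : 'cV[R]_p -> \bar R)
    (D : 'M[R]_(p, d)) (P : 'M[R]_p) (q : 'cV[R]_p) (y z : 'cV[R]_d) : \bar R :=
  (((z^T *m y) 0 0 - 1/2 * quadf (invmx Sigma) z)%:E - hpart Ls b D P q z)%E.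

Definition colgrad k (g : 'cV[R]_k -> R) (x : 'cV[R]_k) : 'cV[R]_k :=
  \col_j ('D_(delta_mx j 0 : 'cV[R]_k) g x).

Definition coljacobian d k (f : 'cV[R]_k -> 'cV[R]_d) (x : 'cV[R]_k) : 'M[R]_(d, k) :=
  \matrix_(i < d, j < k) (('D_(delta_mx j 0 : 'cV[R]_k) f x) i 0).

End Defs.

(* Main.v *)
Require Import Defs.
From HB Require Import structures.
From mathcomp Require Import all_boot all_order all_algebra.
From mathcomp Require Import all_classical all_reals all_analysis.
From mathcomp Require Import ring lra.
Import Order.TTheory GRing.Theory Num.Theory.
Import numFieldNormedType.Exports.
Local Open Scope classical_set_scope.
Local Open Scope ring_scope.

Set Implicit Arguments. Unset Strict Implicit. Unset Printing Implicit Defensive.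

Definition bil (R : realType) n (A : 'M[R]_n) (p q : 'cV[R]_n) : R :=
  (p^T *m A *m q) 0 0.
Definition dotv (R : realType) n (g u : 'cV[R]_n) : R := (g^T *m u) 0 0.

Lemma bilC (R : realType) n (A : 'M[R]_n) p q : A^T = A -> bil A p q = bil A q p.
Proof.
move=> hA; rewrite /bil.
have h1 : forall M : 'M[R]_1, M 0 0 = M^T 0 0 by move=> M; rewrite mxE.
by rewrite h1 !trmx_mul trmxK hA mulmxA.
Qed.

Lemma bilDr (R : realType) n (A : 'M[R]_n) p q r : bil A p (q + r) = bil A p q + bil A p r.
Proof. by rewrite /bil mulmxDr mxE. Qed.
Lemma bilDl (R : realType) n (A : 'M[R]_n) p q r : bil A (p + q) r = bil A p r + bil A q r.
Proof. by rewrite /bil linearD /= !mulmxDl mxE. Qed.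
Lemma bilZr (R : realType) n (A : 'M[R]_n) p q c : bil A p (c *: q) = c * bil A p q.
Proof. by rewrite /bil -scalemxAr mxE. Qed.
Lemma bilZl (R : realType) n (A : 'M[R]_n) p q c : bil A (c *: p) q = c * bil A p q.
Proof. by rewrite /bil linearZ /= -!scalemxAl mxE. Qed.
Lemma bilNr (R : realType) n (A : 'M[R]_n) p q : bil A p (- q) = - bil A p q.
Proof. by rewrite -scaleN1r bilZr mulN1r. Qed.
Lemma bilNl (R : realType) n (A : 'M[R]_n) p q : bil A (- p) q = - bil A p q.
Proof. by rewrite -scaleN1r bilZl mulN1r. Qed.
Lemma quadE (R : realType) n (A : 'M[R]_n) p : quadf A p = bil A p p.
Proof. by []. Qed.
Lemma quadD (R : realType) n (A : 'M[R]_n) p q : A^T = A ->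
  quadf A (p + q) = quadf A p + 2 * bil A p q + quadf A q.
Proof.
move=> hA; rewrite !quadE bilDl !bilDr (bilC q p hA); ring.
Qed.
Lemma quadN (R : realType) n (A : 'M[R]_n) p : quadf A (- p) = quadf A p.
Proof. by rewrite !quadE bilNl bilNr opprK. Qed.
Lemma quadZ (R : realType) n (A : 'M[R]_n) p c : quadf A (c *: p) = c ^+ 2 * quadf A p.
Proof. by rewrite !quadE bilZl bilZr mulrA expr2. Qed.
Lemma quad0 (R : realType) n (A : 'M[R]_n) : quadf A 0 = 0.
Proof. by rewrite quadE /bil mulmx0 mxE. Qed.


Lemma quad_mid (R : realType) n (A : 'M[R]_n) p1 p2 : A^T = A ->
  (forall v, 0 <= quadf A v) ->
  quadf A ((1/2 : R) *: p1 + (1 - 1/2) *: p2) <= (quadf A p1 + quadf A p2) / 2.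
Proof.
move=> hA hpsd.
have := hpsd (p1 - p2).
rewrite !quadD // !quadZ !bilZl !bilZr bilNr quadN.
have -> : (1 - 1/2 : R) = 1/2 by field.
move: (quadf A p1) (quadf A p2) (bil A p1 p2) => a b c.
rewrite expr2. nra.
Qed.

Lemma core (R : realType) n (A : 'M[R]_n) (h : 'cV[R]_n -> \bar R) (m0 zs : 'cV[R]_n) (H : R) :
  A^T = A -> (forall v, 0 <= quadf A v) ->
  (forall z, h z != -oo%E) ->
  (forall z1 z2 r1 r2, h z1 = r1%:E -> h z2 = r2%:E ->
     (h ((1/2 : R) *: z1 + (1 - 1/2) *: z2)%R <= ((r1 + r2) / 2)%:E)%E) ->
  h zs = H%:E ->
  (forall z, ((1/2 * quadf A (zs - m0) + H)%:E <= (1/2 * quadf A (z - m0))%:E + h z)%E) ->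
  forall u, exists v : R,
     ereal_inf (range (fun z => ((1/2 * quadf A (z - (m0 + u)))%:E + h z)%E)) = v%:E /\
     1/2 * quadf A (zs - m0) + H + bil A (m0 - zs) u - quadf A u / 2 <= v /\
     v <= 1/2 * quadf A (zs - m0) + H + bil A (m0 - zs) u + quadf A u / 2.
Proof.
move=> hA hpsd hh hmid hzs hmin.
set V := fun m => ereal_inf (range (fun z => ((1/2 * quadf A (z - m))%:E + h z)%E)).
set V0 := 1/2 * quadf A (zs - m0) + H.
have gN : forall w, bil A (m0 - zs) w = - bil A w (zs - m0).
  by move=> w; rewrite -opprB bilNl (bilC _ _ hA).
have up : forall w, (V (m0 + w)%R <= (V0 + bil A (m0 - zs) w + quadf A w / 2)%:E)%E.
  move=> w; apply: ge_ereal_inf.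
  exists ((1/2 * quadf A (zs - (m0 + w)))%:E + h zs)%E; first by exists zs.
  rewrite hzs -EFinD lee_fin.
  have -> : zs - (m0 + w) = (zs - m0) + (- w) by rewrite opprD addrA.
  rewrite quadD // quadN bilNr gN (bilC (zs - m0) w hA) /V0; lra.
have lo : forall u, ((V0 + bil A (m0 - zs) u - quadf A u / 2)%:E <= V (m0 + u)%R)%E.
  move=> u; apply/ereal_infP => _ [z1 _ <-].
  case E1: (h z1) => [r1| |].
  - rewrite -EFinD lee_fin.
    apply/ler_addgt0Pr => e he.
    have hlt : (V (m0 + - u)%R < (V0 + bil A (m0 - zs) (- u) + quadf A (- u) / 2 + e)%:E)%E.
      apply: (le_lt_trans (up (- u))); rewrite lte_fin; lra.
    have [_ [z2 _ <-] hz2] := ereal_inf_ltP hlt.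
    move: hz2; case E2: (h z2) => [r2| |] hz2.
    + move: hz2; rewrite -EFinD lte_fin => hz2.
      have hm := hmid _ _ _ _ E1 E2.
      have h0 := hmin ((1/2 : R) *: z1 + (1 - 1/2) *: z2).
      have h0' := le_trans h0 (leeD2l _ hm).
      move: h0'; rewrite -EFinD lee_fin => h0'.
      have hq := quad_mid (z1 - (m0 + u)) (z2 - (m0 + - u)) hA hpsd.
      have ee : (1/2 : R) *: (z1 - (m0 + u)) + (1 - 1/2) *: (z2 - (m0 + - u))
                = (1/2 : R) *: z1 + (1 - 1/2) *: z2 - m0.
        by apply/matrixP => i j; rewrite !mxE; field.
      rewrite ee in hq.
      move: hz2; rewrite bilNr quadN => hz2.
      rewrite /V0 in h0' hz2 *; lra.
    + by move: hz2; rewrite addey // ltNge leey.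
    + by move: (hh z2); rewrite E2.
  - by rewrite addey // leey.
  - by move: (hh z1); rewrite E1.
move=> u.
have hfin : V (m0 + u) \is a fin_num.
  rewrite fin_numE; apply/andP; split.
  - by apply/eqP => e; move: (lo u); rewrite e leeNy_eq.
  - by apply/eqP => e; move: (up u); rewrite e leye_eq.
exists (fine (V (m0 + u))); rewrite fineK //; split => //.
split.
  by rewrite -lee_fin fineK //; exact: (lo u).
by rewrite -lee_fin fineK //; exact: (up u).
Qed.


Lemma conj_mid (R : realType) p (L : 'cV[R]_p -> \bar R) w1 w2 l1 l2 :
  (forall t, L t != -oo%E) -> conjugate L w1 = l1%:E -> conjugate L w2 = l2%:E ->
  (conjugate L ((1/2 : R) *: w1 + (1 - 1/2) *: w2)%R <= ((l1 + l2) / 2)%:E)%E.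
Proof.
move=> hL h1 h2; apply: ge_ereal_sup => _ [t _ <-] /=.
case E: (L t) => [r| |].
- have u1 : (((t^T *m w1) 0 0)%:E - r%:E <= l1%:E)%E.
    by rewrite -h1 -E; apply: ereal_sup_ubound; exists t.
  have u2 : (((t^T *m w2) 0 0)%:E - r%:E <= l2%:E)%E.
    by rewrite -h2 -E; apply: ereal_sup_ubound; exists t.
  move: u1 u2; rewrite -!EFinB !lee_fin => u1 u2.
  rewrite mulmxDr -!scalemxAr; move: u1 u2; move: (t^T *m w1) (t^T *m w2) => x1 x2 u1 u2; rewrite !mxE.
  have -> : (1 - 1/2 : R) = 1/2 by field.
  lra.
- have -> : (- +oo)%E = -oo%E :> \bar R by []. 
  by rewrite addeNy leNye.
- by move: (hL t); rewrite E.
Qed.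

Lemma hpart_mid (R : realType) d p (L : 'cV[R]_p -> \bar R) (b : 'cV[R]_p -> \bar R)
  (D : 'M[R]_(p, d)) (P : 'M[R]_p) (q : 'cV[R]_p) z1 z2 r1 r2 :
  (forall t, L t != -oo%E) -> (forall o, b o != -oo%E) ->
  (forall x y, (b ((1/2 : R) *: x + (1 - 1/2) *: y)%R <=
                 (1/2 : R)%:E * b x + (1 - 1/2 : R)%:E * b y)%E) ->
  hpart (conjugate L) b D P q z1 = r1%:E -> hpart (conjugate L) b D P q z2 = r2%:E ->
  (hpart (conjugate L) b D P q ((1/2 : R) *: z1 + (1 - 1/2) *: z2)%R
     <= ((r1 + r2) / 2)%:E)%E.
Proof.
move=> hL hb hbm h1 h2.
apply/lee_addgt0Pr => e he.
have : exists2 x, range (fun o => (conjugate L (D *m z1 + P *m o + q) + b o)%E) x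
     & (x < hpart (conjugate L) b D P q z1 + (e/2)%:E)%E.
  by apply: lb_ereal_inf_adherent; [lra | rewrite /hpart in h1 *; rewrite h1].
case=> _ [oa _ <-] lt1.
have : exists2 x, range (fun o => (conjugate L (D *m z2 + P *m o + q) + b o)%E) x
     & (x < hpart (conjugate L) b D P q z2 + (e/2)%:E)%E.
  by apply: lb_ereal_inf_adherent; [lra | rewrite /hpart in h2 *; rewrite h2].
case=> _ [ob _ <-] lt2.
have lb1 : (r1%:E <= conjugate L (D *m z1 + P *m oa + q) + b oa)%E.
  by rewrite -h1; apply: ereal_inf_lbound; exists oa.
have lb2 : (r2%:E <= conjugate L (D *m z2 + P *m ob + q) + b ob)%E.
  by rewrite -h2; apply: ereal_inf_lbound; exists ob.
rewrite h1 -EFinD in lt1; rewrite h2 -EFinD in lt2.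
have fin_of : forall x y : \bar R, y != -oo%E -> forall c r : R, (r%:E <= x + y)%E -> (x + y < c%:E)%E ->
    x \is a fin_num /\ y \is a fin_num.
  by move=> x y hy c r; case: x => [x| |]; case: y hy => [y| |].
have [f1a f1b] := fin_of _ _ (hb _) _ _ lb1 lt1.
have [f2a f2b] := fin_of _ _ (hb _) _ _ lb2 lt2.
move: lt1 lt2.
rewrite -(fineK f1a) -(fineK f1b) -(fineK f2a) -(fineK f2b).
set l1 := fine (conjugate L _); set c1 := fine (b oa).
set l2 := fine (conjugate L _); set c2 := fine (b ob).
rewrite -!EFinD !lte_fin => lt1 lt2.
set om := ((1/2 : R) *: oa + (1 - 1/2) *: ob).
apply: (@le_trans _ _ (conjugate L (D *m ((1/2 : R) *: z1 + (1 - 1/2) *: z2) + P *m om + q) + b om)%E).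
  by apply: ereal_inf_lbound; exists om.
have ew : D *m ((1/2 : R) *: z1 + (1 - 1/2) *: z2) + P *m om + q =
   (1/2 : R) *: (D *m z1 + P *m oa + q) + (1 - 1/2) *: (D *m z2 + P *m ob + q).
  rewrite /om !mulmxDr -!scalemxAr.
  move: (D *m z1) (D *m z2) (P *m oa) (P *m ob) => x1 x2 y1 y2.
  by apply/matrixP => i j; rewrite !mxE; field.
rewrite ew.
have hc := conj_mid hL (esym (fineK f1a)) (esym (fineK f2a)).
have hbb := hbm oa ob.
rewrite -/om -(fineK f1b) -(fineK f2b) -!EFinM -EFinD in hbb.
apply: (le_trans (leeD hc hbb)).
rewrite -?EFinD -?EFinD lee_fin.
rewrite -/l1 -/l2 -/c1 -/c2.
have -> : (1 - 1/2 : R) = 1/2 by field.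
lra.
Qed.


Lemma entry_le_norm (R : realType) m n (u : 'M[R]_(m, n)) i j : `|u i j| <= `|u|.
Proof.
have -> : `|u| = mx_norm u by [].
rewrite mx_normrE.
exact: (le_bigmax _ (fun ij : 'I_m * 'I_n => `|u ij.1 ij.2|) (i, j)).
Qed.

Lemma mul_entry_bound (R : realType) m n (M : 'M[R]_(m, n)) (u : 'cV[R]_n) i :
  `|(M *m u) i 0| <= (\sum_j `|M i j|) * `|u|.
Proof.
rewrite mxE mulr_suml.
apply: (le_trans (ler_norm_sum _ _ _)).
apply: ler_sum => j _; rewrite normrM; apply: ler_wpM2l => //.
exact: entry_le_norm.
Qed.

Lemma dotv_bound (R : realType) n (g u : 'cV[R]_n) :
  `|dotv g u| <= (\sum_j `|g j 0|) * `|u|.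
Proof.
have := mul_entry_bound g^T u 0.
by under eq_bigr do rewrite mxE.
Qed.

Lemma diff_quad (R : realType) n (f : 'cV[R]_n -> R) (x g : 'cV[R]_n) (C : R) :
  (forall u, `|f (u + x) - f x - dotv g u| <= C * `|u| ^+ 2) ->
  differentiable f x /\ forall v, 'd f x v = dotv g v.
Proof.
move=> hb.
have lin : linear (dotv g).
  by move=> a u v; rewrite /dotv mulmxDr -scalemxAr !mxE.
pose L : {linear 'cV[R]_n -> R} := HB.pack (dotv g) (GRing.isLinear.Build _ _ _ _ _ lin).
have Lc : continuous L.
  apply: bounded_linear_continuous.
  exists (\sum_j `|g j 0|); split; first exact: num_real.
  move=> M /= hM; apply/nbhs_ballP; exists 1 => //= u; rewrite -ball_normE /= sub0r normrN => hu.
  apply: (le_trans (dotv_bound g u)); apply: ltW; apply: (le_lt_trans _ hM).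
  rewrite -[leRHS]mulr1; apply: ler_wpM2l; first by apply: sumr_ge0 => j _.
  exact: ltW.
have dxf : f \o shift x = cst (f x) + L +o_ (0 : 'cV[R]_n) id.
  apply/(@eqaddoP R _ R _ (nbhs (0 : 'cV[R]_n))) => eps heps.
  apply/nbhs_ballP; exists (eps / (`|C| + 1)); first by apply: divr_gt0.
  move=> u; rewrite -ball_normE /= sub0r normrN => hu.
  rewrite [X in `|X| <= _](_ : _ = f (u + x) - f x - dotv g u); last first.
    by rewrite /= opprD addrA.
  apply: (le_trans (hb u)).
  rewrite expr2 mulrA; apply: ler_wpM2r => //.
  apply: (@le_trans _ _ (`|C| * `|u|)); first by apply: ler_wpM2r => //; exact: ler_norm.
  have := hu; rewrite ltr_pdivlMr ?ltr_wpDl // => hu2.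
  have := normr_ge0 u; have := normr_ge0 C; nra.
have hdf (h : 'cV[R]_n -> R) : (f \o shift x = cst (f x) + h +o_ (0 : 'cV[R]_n) id) ->
    h = f \o shift x - cst (f x) +o_ (0 : 'cV[R]_n) id.
  move=> hdf; apply: eqaddoE.
  rewrite hdf addrAC -!addrA addrC !addrA subrK.
  rewrite -[LHS]addr0 -addrA; congr (_ + _).
  by apply/eqP; rewrite eq_sym addrC addr_eq0 oppo.
have hd : differentiable f x.
  apply/diffP => /=.
  rewrite /diff.
  match goal with |- context [get ?P] => apply: (@getPex _ P) end.
  exists L; split=> //; apply: eqaddoEx => z.
  rewrite (hdf _ dxf) !addrA lim_id // /(_ \o _) /= subrK [f _ + _]addrC addrK.
  rewrite -addrA -[LHS]addr0; congr (_ + _).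
  apply/eqP; rewrite eq_sym addrC addr_eq0 oppox; apply/eqP.
  rewrite [in LHS]littleo_center0 (comp_centerK x id).
  by rewrite -[- _ in RHS](comp_centerK x).
split => // v.
by rewrite (diff_unique Lc dxf).
Qed.

Lemma quad_bound (R : realType) n (A : 'M[R]_n) (u : 'cV[R]_n) : A^T = A ->
  quadf A u <= (\sum_j \sum_i `|A j i|) * `|u| ^+ 2.
Proof.
move=> hA.
have -> : quadf A u = dotv (A *m u) u by rewrite /dotv trmx_mul hA /quadf.
apply: (le_trans (ler_norm _)); apply: (le_trans (dotv_bound _ _)).
rewrite expr2 mulrA; apply: ler_wpM2r => //.
rewrite mulr_suml; apply: ler_sum => j _.
exact: mul_entry_bound.
Qed.

Unset Implicit Arguments. Set Strict Implicit. Set Printing Implicit Defensive.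

Theorem theorem4 (R : realType) (d k p : nat)
  (dT : measure_display) (T : measurableType dT) (Prob : probability T R)
  (Omega : T -> 'cV[R]_p)
  (hOmega : forall i, measurable_fun setT (fun x => Omega x i 0))
  (mu : 'cV[R]_k -> 'cV[R]_d) (Sigma : 'M[R]_d) (prior : 'cV[R]_k -> R)
  (D : 'M[R]_(p, d)) (P : 'M[R]_p) (q : 'cV[R]_p)
  (RO : set 'cV[R]_p) (b : 'cV[R]_p -> \bar R)
  (s : 'cV[R]_d) (betaK : 'cV[R]_k) (sstar : 'cV[R]_d) :
  (forall beta, differentiable mu beta) ->
  posdef_mx Sigma ->
  (forall beta, 0 <= prior beta) ->
  (forall beta, differentiable prior beta) ->
  0 < prior betaK ->
  barrier RO b ->
  let Ls := conjugate (logmgf Prob Omega) in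
  let y := invmx Sigma *m mu betaK in
  (* sstar is the argmax (with a finite maximum) defining s^*(Sigma^-1 mu(betaK)) *)
  sstar_obj Sigma Ls b D P q y sstar \is a fin_num ->
  (forall z, (sstar_obj Sigma Ls b D P q y z <= sstar_obj Sigma Ls b D P q y sstar)%E) ->
  let logpost := fun beta : 'cV[R]_k =>
    ln (prior beta) + ln (gauss_density mu Sigma s beta)
    - fine (logPhat mu Sigma Ls b D P q beta) in
  differentiable logpost betaK /\
  colgrad logpost betaK =
    colgrad (fun beta => ln (prior beta)) betaK
    + (coljacobian mu betaK)^T *m invmx Sigma *m (s - sstar).
Proof.
move=> hmu hpd hpr0 hprd hpK hb Ls y Hfin Hmax logpost.
set A := invmx Sigma.
have hdet : \det Sigma != 0.
  apply/negP => /det0P [v hv hvA].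
  have := hpd.2 v^T; rewrite trmx_eq0 => /(_ hv).
  by rewrite /quadf trmxK hvA mul0mx mxE ltxx.
have hU : Sigma \in unitmx by rewrite unitmxE unitfE.
have hAT : A^T = A by rewrite /A trmx_inv hpd.1.
have hpsd : forall v, 0 <= quadf A v.
  move=> v.
  have <- : quadf Sigma (A *m v) = quadf A v.
    rewrite /quadf trmx_mul hAT !mulmxA -(mulmxA (v^T *m A) Sigma A) mulmxV //.
    by rewrite mulmx1.
  have [->|nz] := eqVneq (A *m v) 0; first by rewrite quad0.
  exact/ltW/(hpd.2 _ nz).
set h := hpart Ls b D P q.
set m0 := mu betaK.
have objE : forall z, sstar_obj Sigma Ls b D P q y z =
    ((1/2 * quadf A m0 - 1/2 * quadf A (z - m0))%:E - h z)%E.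
  move=> z; rewrite /sstar_obj; congr ((_)%:E - _)%E.
  rewrite -[z - m0]/(z + - m0) quadD // quadN bilNr /bil /y -mulmxA /A.
  rewrite -/A; lra.
have hh : forall z, h z != -oo%E.
  move=> z; apply/eqP => e.
  have := Hmax z; rewrite objE e /= addey // leye_eq => /eqP hi.
  by move: Hfin; rewrite hi.
have hfs : h sstar \is a fin_num.
  by move: Hfin; rewrite objE fin_numB => /andP[].
set H := fine (h sstar).
have hzs : h sstar = H%:E by rewrite /H fineK.
have hmin : forall z, ((1/2 * quadf A (sstar - m0) + H)%:E <=
    (1/2 * quadf A (z - m0))%:E + h z)%E.
  move=> z; have := Hmax z; rewrite !objE hzs.
  case E: (h z) => [r| |].
  - rewrite -!EFinB -EFinD !lee_fin; lra.
  - by rewrite addey // leey.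
  - by move: (hh z); rewrite E.
have [hb1 hb2 hb3 hb4 hb5] := hb.
have hbn : forall o, b o != -oo%E.
  move=> o; have [io|nio] := pselect (interior RO o).
  - by have := hb1 o io; rewrite fin_numE => /andP[].
  - by rewrite hb2.
have hbm : forall x y, (b ((1/2 : R) *: x + (1 - 1/2) *: y)%R <=
                 (1/2 : R)%:E * b x + (1 - 1/2 : R)%:E * b y)%E.
  move=> x1 x2; apply: hb3; apply/andP; split; lra.
have hLn : forall t, logmgf Prob Omega t != -oo%E.
  by move=> t; rewrite /logmgf; case: (mgf Prob Omega t).
have hmid : forall z1 z2 r1 r2, h z1 = r1%:E -> h z2 = r2%:E ->
     (h ((1/2 : R) *: z1 + (1 - 1/2) *: z2)%R <= ((r1 + r2) / 2)%:E)%E.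
  by move=> z1 z2 r1 r2; apply: hpart_mid.
have hcore := core hAT hpsd hh hmid hzs hmin.
set c := (2 * pi) `^ (- (d%:R) / 2) * (\det Sigma) `^ (- (1/2)) : R.
have hc : 0 < c.
  apply: mulr_gt0; first by apply: powR_gt0; rewrite mulr_gt0 // pi_gt0.
  by rewrite /powR (negbTE hdet) expR_gt0.
pose Vf m := ereal_inf (range (fun z => ((1/2 * quadf A (z - m))%:E + h z)%E)).
pose Psi m := ln c - quadf A (s - m) / 2 + fine (Vf m).
have hlog : logpost = (fun bt => ln (prior bt)) + (Psi \o mu).
  apply/funext => bt; rewrite /logpost /= /gauss_density -/c.
  rewrite lnM ?posrE ?expR_gt0 // expRK /logPhat fineN /Psi.
  by rewrite /= /Vf -/A -/h opprK !fctE /= mulNr -[LHS]addrA.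
have hPsi : differentiable Psi m0 /\ forall v, 'd Psi m0 v = dotv (A *m (s - sstar)) v.
  apply: (@diff_quad _ _ _ _ _ (\sum_j \sum_i `|A j i|)) => u.
  have [v0 [e0 [l0 u0]]] := hcore 0.
  have [v [e [l1 u1]]] := hcore u.
  move: e0 l0 u0; rewrite addr0 /bil mulmx0 mxE quad0 -/(bil A _ _) => e0 l0 u0.
  rewrite /Psi /Vf (addrC u m0) e e0 /=.
  have ee : s - (m0 + u) = (s - m0) + - u by rewrite opprD addrA.
  have es : s - sstar = (s - m0) + (m0 - sstar) by rewrite addrA subrK.
  have hd : dotv (A *m (s - sstar)) u = bil A (s - sstar) u.
    by rewrite /dotv trmx_mul hAT.
  rewrite hd es (bilDl A (s - m0) (m0 - sstar) u) ee quadD // quadN bilNr.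
  have hq := quad_bound u hAT.
  have hq0 := hpsd u.
  apply: le_trans hq.
  rewrite ler_norml; apply/andP; split; lra.
have [hPd hPv] := hPsi.
have hlnd : differentiable (fun bt => ln (prior bt)) betaK.
  have -> : (fun bt => ln (prior bt)) = (@ln R) \o prior by [].
  apply: differentiable_comp => //.
  apply/derivable1_diffP; by have [] := is_derive1_ln hpK.
have hcd : differentiable (Psi \o mu) betaK by apply: differentiable_comp.
have hld : differentiable logpost betaK by rewrite hlog; apply: differentiableD.
split => //.
rewrite -mulmxA; set g := A *m (s - sstar).
apply/matrixP => j i; rewrite (ord1 i) {i}.
rewrite /colgrad !mxE hlog deriveD; last 2 first.
- exact: diff_derivable.
- exact: diff_derivable.
congr (_ + _).
have hdc := diff_comp (hmu betaK) hPd.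
rewrite deriveE //.
have -> : 'd (Psi \o mu) betaK (delta_mx j 0) = 'd Psi m0 ('d mu betaK (delta_mx j 0)).
  by rewrite hdc.
rewrite hPv.
rewrite /dotv mxE; apply: eq_bigr => i _; by rewrite !mxE -deriveE // mulrC.
Qed.
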